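(* For any simple undirected graph $G$, with $$\Lambda_1=\sum_{\{st,uv\}\in Q}\big(a_{su}(k_t+k_v)+a_{sv}(k_t+k_u)+a_{tu}(k_s+k_v)+a_{tv}(k_s+k_u)\big),\qquad \Lambda_2=\sum_{\{st,uv\}\in Q}(a_{su}+a_{sv}+a_{tu}+a_{tv})(k_s+k_t+k_u+k_v),$$ one has $$\Lambda_2=\Lambda_1+\sum_{st\in E}(k_s+k_t)\big((k_s-1)(k_t-1)-|c(s,t)|\big).$$
   Context: $a_{ij}$ adjacency entries, $k_x$ degree, $\Gamma(x)$ neighbourhood, $c(s,t)=\Gamma(s)\cap\Gamma(t)$. $Q$ is the set of unordered pairs $\{st,uv\}$ of edges with $s,t,u,v$ pairwise distinct. *)

(* Defs.v *)
From mathcomp Require Import all_boot all_order all_algebra.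
Set Implicit Arguments. Unset Strict Implicit. Unset Printing Implicit Defensive.
Import GRing.Theory Num.Theory.

(* A simple undirected graph on a finite vertex type T
   is a relation [adj : rel T] that is symmetric and irreflexive. *)

Section Graph.
Variables (T : finType) (adj : rel T).

Definition aij (x y : T) : int := (adj x y : nat)%:Z.

Definition nbhd (x : T) : {set T} := [set y | adj x y].
Definition deg (x : T) : int := #|nbhd x|%:Z.

Definition cn (s t : T) : {set T} := nbhd s :&: nbhd t.

Definition edges : {set {set T}} :=
  [set e | [exists s, exists t, adj s t && (e == [set s; t])]].

Definition Qset : {set {set {set T}}} :=
  [set p | [exists e, exists f,
     [&& e \in edges, f \in edges, [disjoint e & f] & p == [set e; f]]]].

Definition fst2 {U : finType} (A : {set U}) (d : U) : U := odflt d [pick x in A].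
Definition snd2 {U : finType} (A : {set U}) (d : U) : U :=
  odflt d [pick x in A :\ fst2 A d].

Definition lam1_term (s t u v : T) : int :=
  aij s u * (deg t + deg v) + aij s v * (deg t + deg u)
  + aij t u * (deg s + deg v) + aij t v * (deg s + deg u).

Definition lam2_term (s t u v : T) : int :=
  (aij s u + aij s v + aij t u + aij t v) * (deg s + deg t + deg u + deg v).

(* apply a term to a pair {st, uv} \in Q via a chosen labelling;
   d is a default vertex (irrelevant on Q) *)
Definition on_pair (F : T -> T -> T -> T -> int) (d : T) (p : {set {set T}}) : int :=
  let e := fst2 p set0 in let f := snd2 p set0 in
  F (fst2 e d) (snd2 e d) (fst2 f d) (snd2 f d).

Definition Lambda1 (d : T) : int := \sum_(p in Qset) on_pair lam1_term d p.
Definition Lambda2 (d : T) : int := \sum_(p in Qset) on_pair lam2_term d p.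

Definition edge_term (s t : T) : int :=
  (deg s + deg t) * ((deg s - 1) * (deg t - 1) - #|cn s t|%:Z).

Definition edge_sum (d : T) : int :=
  \sum_(e in edges) edge_term (fst2 e d) (snd2 e d).

End Graph.

(* Main.v *)
Require Import Defs.
From mathcomp Require Import all_boot all_order all_algebra.
From mathcomp Require Import ring.
Import GRing.Theory Num.Theory.
Local Open Scope ring_scope.
Set Implicit Arguments. Unset Strict Implicit.
Definition pairsets (U : finType) (r : rel U) : {set {set U}} :=
  [set e | [exists s, exists t, r s t && (e == [set s; t])]].

Arguments pairsets {U}.

Lemma fst2_pair (U : finType) (s t d : U) : s != t ->
  (fst2 [set s; t] d == s) && (snd2 [set s; t] d == t) \/
  (fst2 [set s; t] d == t) && (snd2 [set s; t] d == s).
Proof.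
move=> st; rewrite /snd2 /fst2.
case: pickP => [z Hz | H]; last by have := H s; rewrite !inE eqxx.
have zst : z = s \/ z = t by move: Hz; rewrite !inE => /orP[] /eqP; [left|right].
have ts : t != s by rewrite eq_sym.
have other : forall w, w \in [set s; t] :\ z -> w = (if z == s then t else s).
  move=> w; rewrite !inE => /andP[wz /orP[] /eqP Ew]; subst w;
  case: zst => Ez; subst z; rewrite ?eqxx ?(negbTE ts) //=;
  by rewrite eqxx in wz.
have oin : (if z == s then t else s) \in [set s; t] :\ z.
  case: zst => ->; rewrite ?eqxx ?(negbTE ts) !inE ?eqxx ?orbT ?andbT //=.
case: pickP => [w Hw | H]; last by have := H (if z == s then t else s); rewrite /= [X in X = _]oin.
rewrite /= (other w Hw).
move: Hz; rewrite !inE; case/orP=> /eqP->; rewrite ?eqxx /=; first by left.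
by rewrite (negbTE ts); right.
Qed.

Lemma fst2_sym (U : finType) (R : Type) (g : U -> U -> R) (s t d : U) :
  (forall x y, g x y = g y x) -> s != t ->
  g (fst2 [set s; t] d) (snd2 [set s; t] d) = g s t.
Proof.
move=> gs st; case: (@fst2_pair U s t d st) => /andP[/eqP-> /eqP->] //.
Qed.

Lemma pair_eq (U : finType) (x y s t : U) : x != y ->
  ([set x; y] == [set s; t]) = ((x, y) == (s, t)) || ((x, y) == (t, s)).
Proof.
move=> xy; apply/idP/idP.
  move/eqP=> E.
  have xi : x \in [set s; t] by rewrite -E !inE eqxx.
  have yi : y \in [set s; t] by rewrite -E !inE eqxx orbT.
  move: xi yi; rewrite !inE !xpair_eqE.
  case/orP=> /eqP xe; case/orP=> /eqP ye; subst x y; rewrite ?eqxx ?orbT //.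
  - by rewrite eqxx in xy.
  - by rewrite eqxx in xy.
case/orP=> /eqP [-> ->] //; by rewrite setUC.
Qed.

Lemma pairsum (U : finType) (r : rel U) (rs : symmetric r) (ri : irreflexive r)
  (h : {set U} -> int) :
  \sum_(p : U * U | r p.1 p.2) h [set p.1; p.2] = 2 * \sum_(e in pairsets r) h e.
Proof.
rewrite (partition_big (fun p : U * U => [set p.1; p.2]) (mem (pairsets r))); last first.
  by move=> [x y] /= rxy; rewrite inE; apply/existsP; exists x; apply/existsP; exists y; rewrite rxy eqxx.
rewrite mulr_sumr; apply: eq_bigr => e /=; rewrite inE => /existsP[s /existsP[t /andP[rst /eqP ->]]].
have st : s != t by apply: contraTneq rst => ->; rewrite ri.
rewrite (eq_bigr (fun _ => h [set s; t])); last by move=> p /andP[_ /eqP ->].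
rewrite (eq_bigl (mem [set (s, t); (t, s)])); last first.
  move=> [x y] /=; rewrite !inE.
  case rxy: (r x y) => /=; last first.
    apply/esym/negbTE; rewrite !xpair_eqE; apply/negP => /orP[] /andP[/eqP ex /eqP ey];
      subst x y; [by rewrite rst in rxy | by rewrite rs rst in rxy].
  by rewrite pair_eq //; apply: contraTneq rxy => ->; rewrite ri.
rewrite sumr_const cards2 xpair_eqE (negbTE st) /=.
by rewrite mulr_natl.
Qed.
Lemma disj2 (T : finType) (s t u v : T) :
  [disjoint [set s; t] & [set u; v]] = [&& s != u, s != v, t != u & t != v].
Proof. by rewrite disjoints_subset subUset !sub1set !inE !negb_or !andbA. Qed.

Lemma pairsum2 (U : finType) (r : rel U) (rs : symmetric r) (ri : irreflexive r)
  (g : U -> U -> int) (gs : forall x y, g x y = g y x) (d : U) :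
  \sum_(p : U * U | r p.1 p.2) g p.1 p.2 = 2 * \sum_(e in pairsets r) g (fst2 e d) (snd2 e d).
Proof.
rewrite -pairsum //; apply: eq_bigr => [[x y]] /= rxy; rewrite fst2_sym //.
by apply: contraTneq rxy => ->; rewrite ri.
Qed.

Lemma pairE (U : finType) (r : rel U) (F : U -> U -> int) :
  \sum_(p : U * U | r p.1 p.2) F p.1 p.2 = \sum_s \sum_t (if r s t then F s t else 0).
Proof.
transitivity (\sum_(s | true) \sum_(t | r s t) F s t).
  by rewrite pair_big_dep.
by apply: eq_bigr => s _; rewrite big_mkcond.
Qed.

Definition Dterm (T : finType) (adj : rel T) (s t u v : T) : int :=
  aij adj s u * (deg adj s + deg adj u) + aij adj s v * (deg adj s + deg adj v)
  + aij adj t u * (deg adj t + deg adj u) + aij adj t v * (deg adj t + deg adj v).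

Lemma L1 (T : finType) (adj : rel T) d :
  Lambda2 adj d - Lambda1 adj d = \sum_(p in Qset adj) on_pair (Dterm adj) d p.
Proof.
rewrite /Lambda2 /Lambda1 -sumrB; apply: eq_bigr => p _.
rewrite /on_pair /Dterm /lam2_term /lam1_term; ring.
Qed.

Definition Rq (T : finType) (adj : rel T) (e f : {set T}) :=
  [&& e \in edges adj, f \in edges adj & [disjoint e & f]].

Lemma QsetE (T : finType) (adj : rel T) : Qset adj = pairsets (Rq adj).
Proof.
by apply/setP => p; rewrite !inE /Rq; do 2 (apply: eq_existsb => ?); rewrite !andbA.
Qed.

Lemma aij_sym (T : finType) (adj : rel T) (adj_sym : symmetric adj) x y :
  aij adj x y = aij adj y x.
Proof. by rewrite /aij adj_sym. Qed.

Lemma edge_ne (T : finType) (adj : rel T) e : e \in edges adj -> e != set0.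
Proof.
rewrite inE => /existsP[s /existsP[t /andP[_ /eqP ->]]].
by apply/set0Pn; exists s; rewrite !inE eqxx.
Qed.

Lemma Rq_sym (T : finType) (adj : rel T) : symmetric (Rq adj).
Proof. by move=> e f; rewrite /Rq andbCA andbA disjoint_sym -andbA andbCA. Qed.

Lemma Rq_irr (T : finType) (adj : rel T) : irreflexive (Rq adj).
Proof.
move=> e; rewrite /Rq; apply/negbTE/negP => /and3P[/edge_ne ne _].
rewrite -setI_eq0 setIid; by rewrite (negbTE ne).
Qed.

Definition G (T : finType) (adj : rel T) d (e f : {set T}) :=
  Dterm adj (fst2 e d) (snd2 e d) (fst2 f d) (snd2 f d).

Lemma Dterm_swap (T : finType) (adj : rel T) (adj_sym : symmetric adj) s t u v :
  Dterm adj s t u v = Dterm adj u v s t.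
Proof.
rewrite /Dterm (aij_sym adj_sym u s) (aij_sym adj_sym u t) (aij_sym adj_sym v s) (aij_sym adj_sym v t).
ring.
Qed.

Lemma L2 (T : finType) (adj : rel T) (adj_sym : symmetric adj) d :
  2 * (Lambda2 adj d - Lambda1 adj d) = \sum_(q | Rq adj q.1 q.2) G adj d q.1 q.2.
Proof.
rewrite L1 QsetE (pairsum2 (@Rq_sym T adj) (@Rq_irr T adj) _ set0) //.
by move=> x y; rewrite /G Dterm_swap.
Qed.

Lemma L3 (T : finType) (adj : rel T) d :
  \sum_(q | Rq adj q.1 q.2) G adj d q.1 q.2 =
  \sum_(e in edges adj) \sum_(f in edges adj) (if [disjoint e & f] then G adj d e f else 0).
Proof.
transitivity (\sum_(e in edges adj) \sum_(f | (f \in edges adj) && [disjoint e & f]) G adj d e f).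
  by rewrite pair_big_dep.
by apply: eq_bigr => e _; rewrite big_mkcondr.
Qed.

Lemma edgesum (T : finType) (adj : rel T) (adj_sym : symmetric adj) (adj_irr : irreflexive adj)
  (h : {set T} -> int) :
  2 * \sum_(e in edges adj) h e = \sum_s \sum_t (if adj s t then h [set s; t] else 0).
Proof.
rewrite -(pairsum adj_sym adj_irr); exact: (pairE adj (fun x y => h [set x; y])).
Qed.

Lemma L4 (T : finType) (adj : rel T) (adj_sym : symmetric adj) (adj_irr : irreflexive adj)
  (H : {set T} -> {set T} -> int) :
  4 * \sum_(e in edges adj) \sum_(f in edges adj) H e f =
  \sum_s \sum_t (if adj s t then \sum_u \sum_v (if adj u v then H [set s; t] [set u; v] else 0) else 0).
Proof.
have -> : 4 * \sum_(e in edges adj) \sum_(f in edges adj) H e f =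
   2 * \sum_(e in edges adj) (2 * \sum_(f in edges adj) H e f).
  by rewrite -mulr_sumr mulrA.
under eq_bigr => e _ do rewrite (edgesum adj_sym adj_irr (H e)).
by rewrite (edgesum adj_sym adj_irr).
Qed.

Lemma G_pair (T : finType) (adj : rel T) d s t u v : s != t -> u != v ->
  G adj d [set s; t] [set u; v] = Dterm adj s t u v.
Proof.
move=> st uv; rewrite /G.
rewrite (fst2_sym (g := fun x y => Dterm adj x y (fst2 [set u; v] d) (snd2 [set u; v] d))) //; last first.
  by move=> x y; rewrite /Dterm; ring.
rewrite (fst2_sym (g := fun x y => Dterm adj s t x y)) //.
by move=> x y; rewrite /Dterm; ring.
Qed.

Definition C4 (T : finType) (adj : rel T) (s t u v : T) : bool :=
  adj s t && adj u v && [&& s != u, s != v, t != u & t != v].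

Definition Q4 (T : finType) (adj : rel T) (f : T -> T -> T -> T -> int) : int :=
  \sum_s \sum_t \sum_u \sum_v (if C4 adj s t u v then f s t u v else 0).

Lemma L5 (T : finType) (adj : rel T) (adj_irr : irreflexive adj) d :
  \sum_s \sum_t (if adj s t then \sum_u \sum_v (if adj u v then
     (if [disjoint [set s; t] & [set u; v]] then G adj d [set s; t] [set u; v] else 0) else 0) else 0)
  = Q4 adj (Dterm adj).
Proof.
apply: eq_bigr => s _; apply: eq_bigr => t _.
rewrite /C4; case st: (adj s t); last by rewrite big1 // => u _; rewrite big1.
have nst : s != t by apply: contraTneq st => ->; rewrite adj_irr.
apply: eq_bigr => u _; apply: eq_bigr => v _.
case uv: (adj u v) => //=.
have nuv : u != v by apply: contraTneq uv => ->; rewrite adj_irr.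
by rewrite disj2 G_pair.
Qed.

Lemma Q4_split (T : finType) (adj : rel T) f g :
  Q4 adj (fun s t u v => f s t u v + g s t u v) = Q4 adj f + Q4 adj g.
Proof.
rewrite /Q4 -big_split; apply: eq_bigr => s _.
rewrite -big_split; apply: eq_bigr => t _.
rewrite -big_split; apply: eq_bigr => u _.
rewrite -big_split; apply: eq_bigr => v _.
by case: (C4 adj s t u v); rewrite ?addr0.
Qed.

Lemma C4_swap1 (T : finType) (adj : rel T) (adj_sym : symmetric adj) s t u v :
  C4 adj s t u v = C4 adj t s u v.
Proof.
rewrite /C4 adj_sym; congr (_ && _).
by case: (s != u); case: (s != v); case: (t != u); case: (t != v).
Qed.

Lemma C4_swap2 (T : finType) (adj : rel T) (adj_sym : symmetric adj) s t u v :
  C4 adj s t u v = C4 adj s t v u.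
Proof.
rewrite /C4 (adj_sym u v); congr (_ && _).
by case: (s != u); case: (s != v); case: (t != u); case: (t != v).
Qed.

Lemma Q4_sw1 (T : finType) (adj : rel T) (adj_sym : symmetric adj) f :
  Q4 adj f = Q4 adj (fun s t u v => f t s u v).
Proof.
rewrite /Q4 exchange_big; apply: eq_bigr => s _; apply: eq_bigr => t _.
apply: eq_bigr => u _; apply: eq_bigr => v _.
by rewrite (C4_swap1 adj_sym).
Qed.

Lemma Q4_sw2 (T : finType) (adj : rel T) (adj_sym : symmetric adj) f :
  Q4 adj f = Q4 adj (fun s t u v => f s t v u).
Proof.
rewrite /Q4; apply: eq_bigr => s _; apply: eq_bigr => t _.
rewrite exchange_big; apply: eq_bigr => u _; apply: eq_bigr => v _.
by rewrite (C4_swap2 adj_sym).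
Qed.

Definition phi (T : finType) (adj : rel T) (x y : T) : int :=
  aij adj x y * (deg adj x + deg adj y).

Lemma L6 (T : finType) (adj : rel T) (adj_sym : symmetric adj) :
  Q4 adj (Dterm adj) = 4 * Q4 adj (fun s t u v => phi adj s u).
Proof.
have -> : Dterm adj = fun s t u v =>
   phi adj s u + phi adj s v + phi adj t u + phi adj t v by [].
rewrite !Q4_split.
rewrite [Q4 adj (fun s t u v => phi adj s v)](Q4_sw2 adj_sym).
rewrite [Q4 adj (fun s t u v => phi adj t u)](Q4_sw1 adj_sym).
rewrite [Q4 adj (fun s t u v => phi adj t v)](Q4_sw1 adj_sym) (Q4_sw2 adj_sym) /=.
set X := Q4 _ _.
ring.
Qed.

Lemma sumb (T : finType) (A : {set T}) :
  \sum_t (((t \in A) : nat)%:Z) = #|A|%:Z.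
Proof.
rewrite -sum1_card (big_morph Posz PoszD (erefl 0%:Z)) [in RHS]big_mkcond /=.
by apply: eq_bigr => t _; case: (t \in A).
Qed.

Lemma countN (T : finType) (adj : rel T) (adj_sym : symmetric adj) (adj_irr : irreflexive adj) s u :
  adj s u ->
  \sum_t \sum_v ((C4 adj s t u v : nat)%:Z) =
  (deg adj s - 1) * (deg adj u - 1) - #|cn adj s u|%:Z.
Proof.
move=> su.
have nsu : s != u by apply: contraTneq su => ->; rewrite adj_irr.
pose al t := t \in nbhd adj s :\ u.
pose be v := v \in nbhd adj u :\ s.
have CE : forall t v, C4 adj s t u v = al t && be v && (t != v).
  move=> t v; rewrite /C4 /al /be !inE nsu /= (eq_sym v s).
  by case: (adj s t); case: (adj u v); case: (t != u); case: (s != v); case: (t != v).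
have inner : forall t, \sum_v ((C4 adj s t u v : nat)%:Z) =
    ((al t : nat)%:Z) * (\sum_v ((be v : nat)%:Z) - ((be t : nat)%:Z)).
  move=> t; rewrite [in RHS](bigD1 t) //= addrC addrK mulr_sumr.
  rewrite (bigD1 t) //= CE eqxx andbF add0r; apply: eq_bigr => v vt.
  by rewrite CE eq_sym vt andbT; case: (al t); case: (be v).
under eq_bigr => t _ do rewrite inner.
have -> : \sum_t ((al t : nat)%:Z) * (\sum_v ((be v : nat)%:Z) - ((be t : nat)%:Z)) =
   (\sum_t ((al t : nat)%:Z)) * (\sum_v ((be v : nat)%:Z)) - \sum_t ((al t && be t : nat)%:Z).
  rewrite mulr_suml -sumrB; apply: eq_bigr => t _.
  by rewrite mulrBr; case: (al t); case: (be t).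
rewrite /al /be !sumb.
have -> : \sum_t (((t \in nbhd adj s :\ u) && (t \in nbhd adj u :\ s) : nat)%:Z) =
   \sum_t (((t \in cn adj s u) : nat)%:Z).
  apply: eq_bigr => t _; rewrite !inE.
  case ast: (adj s t); case aut: (adj u t); rewrite /= ?andbF ?andbT ?andFb //.
  have -> : t != u by apply: contraTneq aut => ->; rewrite adj_irr.
  have -> : t != s by apply: contraTneq ast => ->; rewrite adj_irr.
  by [].
rewrite (sumb (cn adj s u)) /deg (cardsD1 u (nbhd adj s)) (cardsD1 s (nbhd adj u)) !inE su (adj_sym u s) su.
by rewrite !PoszD /=; ring.
Qed.

Lemma L7 (T : finType) (adj : rel T) (adj_sym : symmetric adj) (adj_irr : irreflexive adj) :
  Q4 adj (fun s t u v => phi adj s u) =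
  \sum_s \sum_u (if adj s u then edge_term adj s u else 0).
Proof.
rewrite /Q4; apply: eq_bigr => s _; rewrite exchange_big; apply: eq_bigr => u _.
case su: (adj s u); last first.
  by rewrite big1 // => t _; rewrite big1 // => v _; rewrite /phi /aij su mul0r; case: (C4 _ _ _ _ _).
have -> : \sum_t \sum_v (if C4 adj s t u v then phi adj s u else 0) =
    phi adj s u * \sum_t \sum_v ((C4 adj s t u v : nat)%:Z).
  rewrite mulr_sumr; apply: eq_bigr => t _; rewrite mulr_sumr; apply: eq_bigr => v _.
  by case: (C4 _ _ _ _ _); rewrite ?mulr1 ?mulr0.
rewrite countN // /phi /aij su /edge_term /=; ring.
Qed.

Lemma ES (T : finType) (adj : rel T) (adj_sym : symmetric adj) (adj_irr : irreflexive adj) d :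
  2 * edge_sum adj d = \sum_s \sum_u (if adj s u then edge_term adj s u else 0).
Proof.
rewrite /edge_sum -(pairsum2 adj_sym adj_irr (g := edge_term adj)); last first.
  by move=> x y; rewrite /edge_term /cn setIC; ring.
exact: (pairE adj (edge_term adj)).
Qed.

Unset Implicit Arguments.
Theorem proposition15 (T : finType) (adj : rel T)
    (adj_sym : symmetric adj) (adj_irr : irreflexive adj) (d : T) :
  Lambda2 adj d = Lambda1 adj d + edge_sum adj d.
Proof.
have E : 8 * (Lambda2 adj d - Lambda1 adj d) = 8 * edge_sum adj d.
  have -> : 8 * (Lambda2 adj d - Lambda1 adj d) = 4 * (2 * (Lambda2 adj d - Lambda1 adj d)) by ring.
  rewrite (L2 adj_sym) L3 (L4 adj_sym adj_irr) (L5 adj_irr) (L6 adj_sym) (L7 adj_sym adj_irr).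
  rewrite -(ES adj_sym adj_irr d); ring.
have E' := mulfI _ E.
by rewrite -E' // addrC subrK.
Qed.
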